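(* Let $\{\mathcal G,(\Gamma_0,\Gamma_1),(\widetilde\Gamma_0,\widetilde\Gamma_1)\}$ be a triple for the adjoint pair $\{S,\widetilde S\}$ satisfying (G) and (M). Then: (i) if $\operatorname{ran}\Gamma_0$ is dense in $\mathcal G$ and $\operatorname{ran}\widetilde\Gamma_0=\mathcal G$, then $\operatorname{ran}(\Gamma_0,\Gamma_1)^\top$ is dense in $\mathcal G\times\mathcal G$; (ii) if $\operatorname{ran}\widetilde\Gamma_0$ is dense in $\mathcal G$ and $\operatorname{ran}\Gamma_0=\mathcal G$, then $\operatorname{ran}(\widetilde\Gamma_0,\widetilde\Gamma_1)^\top$ is dense in $\mathcal G\times\mathcal G$. In particular, if $\operatorname{ran}\Gamma_0=\operatorname{ran}\widetilde\Gamma_0=\mathcal G$, then condition (DD) holds and the triple is a quasi boundary triple for $\{S,\widetilde S\}$.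
   Context: Let $\mathfrak H$ be a separable Hilbert space. An adjoint pair $\{S,\widetilde S\}$ consists of densely defined closed operators $S,\widetilde S$ in $\mathfrak H$ with $(Sf,g)=(f,\widetilde Sg)$ for all $f\in\operatorname{dom}S$, $g\in\operatorname{dom}\widetilde S$. Fix operators $T\subset S^*$ and $\widetilde T\subset\widetilde S^*$ which are cores, i.e. $\overline T=S^*$ and $\overline{\widetilde T}=\widetilde S^*$ (equivalently $T^*=S$, $\widetilde T^*=\widetilde S$). A triple $\{\mathcal G,(\Gamma_0,\Gamma_1),(\widetilde\Gamma_0,\widetilde\Gamma_1)\}$ for $\{S,\widetilde S\}$ consists of a Hilbert space $\mathcal G$ and linear maps $\Gamma_0,\Gamma_1:\operatorname{dom}T\to\mathcal G$, $\widetilde\Gamma_0,\widetilde\Gamma_1:\operatorname{dom}\widetilde T\to\mathcal G$. Put $A_0:=T\upharpoonright\ker\Gamma_0$ and $\widetilde A_0:=\widetilde T\upharpoonright\ker\widetilde\Gamma_0$. Conditions: (G) $(Tf,g)_{\mathfrak H}-(f,\widetilde Tg)_{\mathfrak H}=(\Gamma_1f,\widetilde\Gamma_0g)_{\mathcal G}-(\Gamma_0f,\widetilde\Gamma_1g)_{\mathcal G}$ for all $f\in\operatorname{dom}T$, $g\in\operatorname{dom}\widetilde T$; (D) $\operatorname{ran}\Gamma_0$ and $\operatorname{ran}\widetilde\Gamma_0$ are dense in $\mathcal G$; (DD) $\operatorname{ran}(\Gamma_0,\Gamma_1)^\top$ and $\operatorname{ran}(\widetilde\Gamma_0,\widetilde\Gamma_1)^\top$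 are dense in $\mathcal G\times\mathcal G$; (M) $A_0^*=\widetilde A_0$ and $\widetilde A_0^*=A_0$. A quasi boundary triple is a triple satisfying (G), (DD) and (M). *)

(* Defs.v *)
From HB Require Import structures.
From mathcomp Require Import all_boot all_order all_algebra.
From mathcomp Require Import classical_sets reals.
From mathcomp Require Import complex.
Set Implicit Arguments. Unset Strict Implicit. Unset Printing Implicit Defensive.
Import Order.TTheory GRing.Theory Num.Theory.
Local Open Scope ring_scope.
Local Open Scope classical_set_scope.

Section Hilbert.
Variables (R : realType) (V : lmodType R[i]) (ip : V -> V -> R[i]).

Definition nsq (x : V) : R := complex.Re (ip x x).

Definition is_inner_product : Prop :=
  [/\ (forall (a : R[i]) x y z, ip (a *: x + y) z = a * ip x z + ip y z),
      (forall x y, ip y x = Num.conj (ip x y)),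
      (forall x, 0 <= ip x x) &
      (forall x, ip x x = 0 -> x = 0)].

Definition is_complete : Prop :=
  forall u : nat -> V,
    (forall eps : R, 0 < eps -> exists N, forall m n, (N <= m)%N -> (N <= n)%N ->
        nsq (u m - u n) < eps) ->
    exists x, forall eps : R, 0 < eps -> exists N, forall n, (N <= n)%N ->
        nsq (u n - x) < eps.

Definition is_hilbert : Prop := is_inner_product /\ is_complete.

Definition dense_in (A : set V) : Prop :=
  forall x (eps : R), 0 < eps -> exists a, A a /\ nsq (x - a) < eps.

Definition dense_in2 (A : set (V * V)) : Prop :=
  forall x y (eps : R), 0 < eps ->
    exists p, A p /\ nsq (x - p.1) + nsq (y - p.2) < eps.

Definition separable : Prop := exists u : nat -> V, dense_in (range u).

(* ---------- operators, represented by their graphs ---------- *)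
Definition is_operator (A : set (V * V)) : Prop :=
  [/\ A (0, 0),
      (forall (a : R[i]) p q, A p -> A q -> A (a *: p.1 + q.1, a *: p.2 + q.2)) &
      (forall f h k, A (f, h) -> A (f, k) -> h = k)].

Definition dom (A : set (V * V)) : set V := [set f | exists h, A (f, h)].

Definition adjoint (A : set (V * V)) : set (V * V) :=
  [set q | forall p, A p -> ip p.2 q.1 = ip p.1 q.2].

Definition gclosure (A : set (V * V)) : set (V * V) :=
  [set q | forall eps : R, 0 < eps ->
     exists p, A p /\ nsq (q.1 - p.1) + nsq (q.2 - p.2) < eps].

Definition densely_defined (A : set (V * V)) : Prop := dense_in (dom A).
Definition closed_op (A : set (V * V)) : Prop := gclosure A `<=` A.

Definition adjoint_pair (S St : set (V * V)) : Prop :=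
  [/\ is_operator S /\ is_operator St, densely_defined S /\ densely_defined St,
      closed_op S /\ closed_op St &
      (forall p q, S p -> St q -> ip p.2 q.1 = ip p.1 q.2)].

End Hilbert.

Section Triples.
Variables (R : realType) (H : lmodType R[i]) (ipH : H -> H -> R[i])
          (G : lmodType R[i]) (ipG : G -> G -> R[i]).

Definition linear_on (D : set H) (L : H -> G) : Prop :=
  forall (a : R[i]) f g, D f -> D g -> L (a *: f + g) = a *: L f + L g.

Definition restr_ker (T : set (H * H)) (Gam0 : H -> G) : set (H * H) :=
  [set p | T p /\ Gam0 p.1 = 0].

Definition ran (T : set (H * H)) (L : H -> G) : set G := L @` dom T.

Definition ran2 (T : set (H * H)) (L0 L1 : H -> G) : set (G * G) :=
  [set (L0 f, L1 f) | f in dom T].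

Definition cond_G (T Tt : set (H * H)) (Gam0 Gam1 Gamt0 Gamt1 : H -> G) : Prop :=
  forall p q, T p -> Tt q ->
    ipH p.2 q.1 - ipH p.1 q.2 = ipG (Gam1 p.1) (Gamt0 q.1) - ipG (Gam0 p.1) (Gamt1 q.1).

Definition cond_D (T Tt : set (H * H)) (Gam0 Gamt0 : H -> G) : Prop :=
  dense_in ipG (ran T Gam0) /\ dense_in ipG (ran Tt Gamt0).

Definition cond_DD (T Tt : set (H * H)) (Gam0 Gam1 Gamt0 Gamt1 : H -> G) : Prop :=
  dense_in2 ipG (ran2 T Gam0 Gam1) /\ dense_in2 ipG (ran2 Tt Gamt0 Gamt1).

Definition cond_M (T Tt : set (H * H)) (Gam0 Gamt0 : H -> G) : Prop :=
  adjoint ipH (restr_ker T Gam0) = restr_ker Tt Gamt0 /\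
  adjoint ipH (restr_ker Tt Gamt0) = restr_ker T Gam0.

(* standing setting: {S,St} adjoint pair, T, Tt cores of S^*, St^*, and
   Gamma maps linear on dom T, dom Tt *)
Definition triple_setting (S St T Tt : set (H * H))
    (Gam0 Gam1 Gamt0 Gamt1 : H -> G) : Prop :=
  [/\ adjoint_pair ipH S St,
      is_operator T /\ is_operator Tt,
      T `<=` adjoint ipH S /\ Tt `<=` adjoint ipH St,
      gclosure ipH T = adjoint ipH S /\ gclosure ipH Tt = adjoint ipH St &
      [/\ linear_on (dom T) Gam0, linear_on (dom T) Gam1,
          linear_on (dom Tt) Gamt0 & linear_on (dom Tt) Gamt1]].

Definition quasi_boundary_triple (T Tt : set (H * H))
    (Gam0 Gam1 Gamt0 Gamt1 : H -> G) : Prop :=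
  [/\ cond_G T Tt Gam0 Gam1 Gamt0 Gamt1,
      cond_DD T Tt Gam0 Gam1 Gamt0 Gamt1 &
      cond_M T Tt Gam0 Gamt0].

End Triples.

(* Main.v *)
Require Import Defs.
From HB Require Import structures.
From mathcomp Require Import all_boot all_order all_algebra.
From mathcomp Require Import boolp classical_sets reals.
From mathcomp Require Import complex.
From mathcomp Require Import ring lra.
Import Order.TTheory GRing.Theory Num.Theory.
Local Open Scope ring_scope.
Local Open Scope classical_set_scope.
Local Open Scope complex_scope.
Set Implicit Arguments. Unset Strict Implicit.

Lemma ReD (R : realType) (a b : R[i]) : complex.Re (a + b) = complex.Re a + complex.Re b.
Proof. by case: a; case: b. Qed.
Lemma ImD (R : realType) (a b : R[i]) : complex.Im (a + b) = complex.Im a + complex.Im b.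
Proof. by case: a; case: b. Qed.
Lemma ReRM (R : realType) (c : R) (b : R[i]) : complex.Re (c%:C * b) = c * complex.Re b.
Proof. by case: b => x y /=; rewrite mul0r subr0. Qed.
Lemma ReconjE (R : realType) (b : R[i]) : complex.Re (Num.conj b) = complex.Re b.
Proof. by case: b. Qed.
Lemma ReiM (R : realType) (b : R[i]) : complex.Re ('i%C * b) = - complex.Im b.
Proof. case: b => x y /=. ring. Qed.
Lemma complex_eq0 (R : realType) (b : R[i]) :
  complex.Re b = 0 -> complex.Im b = 0 -> b = 0.
Proof. case: b => x y /= hx hy. by rewrite hx hy. Qed.

Definition re (R : realType) (V : lmodType R[i]) (ip : V -> V -> R[i]) x y :=
  complex.Re (ip x y).


Lemma ipDl (R : realType) (V : lmodType R[i]) (ip : V -> V -> R[i]) :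
  is_inner_product ip -> forall x y z, ip (x + y) z = ip x z + ip y z.
Proof. by case=> L _ _ _ x y z; rewrite -[x]scale1r L mul1r scale1r. Qed.
Lemma ip0l (R : realType) (V : lmodType R[i]) (ip : V -> V -> R[i]) :
  is_inner_product ip -> forall z, ip 0 z = 0.
Proof.
move=> h z; have E := ipDl h 0 0 z; rewrite addr0 in E.
by apply: (addrI (ip 0 z)); rewrite addr0 -E.
Qed.
Lemma ipZl (R : realType) (V : lmodType R[i]) (ip : V -> V -> R[i]) :
  is_inner_product ip -> forall a x z, ip (a *: x) z = a * ip x z.
Proof.
move=> h a x z; have := ip0l h z; case: h => L _ _ _ E.
by rewrite -[a *: x]addr0 L E addr0.
Qed.
Lemma ipC (R : realType) (V : lmodType R[i]) (ip : V -> V -> R[i]) :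
  is_inner_product ip -> forall x y, ip y x = Num.conj (ip x y).
Proof. by case. Qed.
Lemma ip0r (R : realType) (V : lmodType R[i]) (ip : V -> V -> R[i]) :
  is_inner_product ip -> forall z, ip z 0 = 0.
Proof. by move=> h z; rewrite (ipC h) (ip0l h) rmorph0. Qed.
Lemma ipNl (R : realType) (V : lmodType R[i]) (ip : V -> V -> R[i]) :
  is_inner_product ip -> forall x z, ip (- x) z = - ip x z.
Proof.
move=> h x z; apply: (addrI (ip x z)); rewrite -(ipDl h) subrr (ip0l h).
by rewrite subrr.
Qed.

Lemma reDl (R : realType) (V : lmodType R[i]) (ip : V -> V -> R[i]) :
  is_inner_product ip -> forall x y z, re ip (x + y) z = re ip x z + re ip y z.
Proof. by move=> h x y z; rewrite /re (ipDl h) ReD. Qed.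
Lemma reNl (R : realType) (V : lmodType R[i]) (ip : V -> V -> R[i]) :
  is_inner_product ip -> forall x z, re ip (- x) z = - re ip x z.
Proof. by move=> h x z; rewrite /re (ipNl h); case: (ip x z). Qed.
Lemma reZl (R : realType) (V : lmodType R[i]) (ip : V -> V -> R[i]) :
  is_inner_product ip -> forall (c : R) x z, re ip (c%:C *: x) z = c * re ip x z.
Proof. by move=> h c x z; rewrite /re (ipZl h) ReRM. Qed.
Lemma reC (R : realType) (V : lmodType R[i]) (ip : V -> V -> R[i]) :
  is_inner_product ip -> forall x y, re ip x y = re ip y x.
Proof. by move=> h x y; rewrite /re (ipC h x y) ReconjE. Qed.
Lemma re0l (R : realType) (V : lmodType R[i]) (ip : V -> V -> R[i]) :
  is_inner_product ip -> forall z, re ip 0 z = 0.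
Proof. by move=> h z; rewrite /re (ip0l h). Qed.

Lemma nsq_re (R : realType) (V : lmodType R[i]) (ip : V -> V -> R[i]) x :
  nsq ip x = re ip x x.
Proof. by []. Qed.
Lemma nsq_ge0 (R : realType) (V : lmodType R[i]) (ip : V -> V -> R[i]) :
  is_inner_product ip -> forall x, 0 <= nsq ip x.
Proof. by case=> _ _ P _ x; have := P x; rewrite lecE /nsq => /andP[]. Qed.
Lemma nsq_eq0 (R : realType) (V : lmodType R[i]) (ip : V -> V -> R[i]) :
  is_inner_product ip -> forall x, nsq ip x = 0 -> x = 0.
Proof.
case=> _ _ P D x E; apply: D; apply: complex_eq0 => //.
by have := P x; rewrite lecE => /andP[/eqP -> _].
Qed.
Lemma nsqD (R : realType) (V : lmodType R[i]) (ip : V -> V -> R[i]) :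
  is_inner_product ip -> forall x y,
  nsq ip (x + y) = nsq ip x + nsq ip y + 2 * re ip x y.
Proof.
move=> h x y; rewrite !nsq_re (reDl h) ![re ip _ (x + y)](reC h) !(reDl h).
rewrite [re ip y x](reC h); lra.
Qed.

Lemma reZr (R : realType) (V : lmodType R[i]) (ip : V -> V -> R[i]) :
  is_inner_product ip -> forall (c : R) x z, re ip x (c%:C *: z) = c * re ip x z.
Proof. by move=> h c x z; rewrite (reC h) (reZl h) (reC h). Qed.
Lemma reDr (R : realType) (V : lmodType R[i]) (ip : V -> V -> R[i]) :
  is_inner_product ip -> forall x y z, re ip z (x + y) = re ip z x + re ip z y.
Proof. by move=> h x y z; rewrite !(reC h z) (reDl h). Qed.
Lemma reNr (R : realType) (V : lmodType R[i]) (ip : V -> V -> R[i]) :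
  is_inner_product ip -> forall x z, re ip z (- x) = - re ip z x.
Proof. by move=> h x z; rewrite !(reC h z) (reNl h). Qed.
Lemma re0r (R : realType) (V : lmodType R[i]) (ip : V -> V -> R[i]) :
  is_inner_product ip -> forall z, re ip z 0 = 0.
Proof. by move=> h z; rewrite (reC h) (re0l h). Qed.

Lemma nsqN (R : realType) (V : lmodType R[i]) (ip : V -> V -> R[i]) :
  is_inner_product ip -> forall x, nsq ip (- x) = nsq ip x.
Proof. by move=> h x; rewrite !nsq_re (reNl h) (reNr h) opprK. Qed.
Lemma nsqB (R : realType) (V : lmodType R[i]) (ip : V -> V -> R[i]) :
  is_inner_product ip -> forall x y,
  nsq ip (x - y) = nsq ip x + nsq ip y - 2 * re ip x y.
Proof. by move=> h x y; rewrite (nsqD h) (nsqN h) (reNr h); lra. Qed.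
Lemma nsqDZ (R : realType) (V : lmodType R[i]) (ip : V -> V -> R[i]) :
  is_inner_product ip -> forall p w (c : R),
  nsq ip (p + c%:C *: w) = nsq ip p + 2 * c * re ip p w + c ^+ 2 * nsq ip w.
Proof.
move=> h p w c; rewrite (nsqD h) (reZr h) !nsq_re (reZl h) (reZr h); lra.
Qed.
Lemma nsq_dbl (R : realType) (V : lmodType R[i]) (ip : V -> V -> R[i]) :
  is_inner_product ip -> forall v, nsq ip (v + v) = 4 * nsq ip v.
Proof. by move=> h v; rewrite (nsqD h) -nsq_re; lra. Qed.

Lemma quad_bound (R : realType) (B C K : R) : 0 < C ->
  (forall t, 2 * t * B - t ^+ 2 * C <= K) -> B ^+ 2 <= K * C.
Proof.
move=> C0 H; have := H (B / C).
have -> : 2 * (B / C) * B - (B / C) ^+ 2 * C = B ^+ 2 / C.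
  by field; rewrite gt_eqF.
by rewrite ler_pdivrMr.
Qed.

Lemma CS_re (R : realType) (V : lmodType R[i]) (ip : V -> V -> R[i]) :
  is_inner_product ip -> forall e w, re ip e w ^+ 2 <= nsq ip e * nsq ip w.
Proof.
move=> h e w; have [w0|wn0] := eqVneq w 0.
  by rewrite w0 (re0r h) expr0n /= mulr_ge0 // (nsq_ge0 h).
have C0 : 0 < nsq ip w.
  rewrite lt_def (nsq_ge0 h) andbT; apply/eqP => E; move: wn0.
  by rewrite (nsq_eq0 h E) eqxx.
apply: quad_bound => // t; have := nsq_ge0 h (e + (- t)%:C *: w).
rewrite (nsqDZ h); lra.
Qed.

Definition en (R : realType) (n : nat) : R := (n.+1%:R)^-1.
Lemma en_gt0 (R : realType) n : 0 < en R n.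
Proof. by rewrite /en invr_gt0 ltr0n. Qed.
Lemma en_small (R : realType) (eps : R) : 0 < eps ->
  exists N, forall n, (N <= n)%N -> en R n < eps.
Proof.
move=> e0; exists (Num.Def.archi_bound eps^-1) => n Hn.
have h1 : eps^-1 < (Num.Def.archi_bound eps^-1)%:R.
  by apply: archi_boundP; rewrite invr_ge0 ltW.
rewrite /en -[eps]invrK ltf_pV2 ?posrE ?invr_gt0 ?ltr0n //.
apply: (lt_le_trans h1); rewrite ler_nat; exact: leqW.
Qed.

Lemma perp_dense (R : realType) (V : lmodType R[i]) (ip : V -> V -> R[i])
  (h : is_inner_product ip) (hc : is_complete ip) (W : set V)
  (W0 : W 0) (WL : forall a u v, W u -> W v -> W (a *: u + v))
  (perp : forall z, (forall w, W w -> ip w z = 0) -> z = 0) : dense_in ip W.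
Proof.
move=> x eps eps0.
pose E := [set r : R | exists a, W a /\ r = nsq ip (x - a)].
have hE : has_inf E.
  split; first by exists (nsq ip (x - 0)); exists 0.
  by exists 0 => r [b [_ ->]]; exact: nsq_ge0.
pose d := inf E.
have dle b : W b -> d <= nsq ip (x - b).
  by move=> Wb; apply: (ge_inf hE.2); exists b.
have /choice [a Ha] : forall n, exists a, W a /\ nsq ip (x - a) < d + en R n.
  move=> n; have [r [b [Wb ->]] lt] := inf_adherent (en_gt0 R n) hE.
  by exists b.
have cau n m : nsq ip (a m - a n) <= 2 * en R n + 2 * en R m.
  pose c := (2^-1 : R)%:C *: (a n + a m).
  have Wc : W c.
    rewrite /c -[_ *: _]addr0; apply: (WL) => //.
    rewrite -[a n]scale1r; apply: (WL); [exact: (Ha n).1 | exact: (Ha m).1].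
  have cc : c + c = a n + a m.
    rewrite /c -scalerDl -rmorphD /=.
    have -> : (2^-1 + 2^-1 : R) = 1 by field.
    by rewrite rmorph1 scale1r.
  have E1 : (x - c) + (x - c) = (x - a n) + (x - a m).
    by rewrite addrACA -opprD cc [RHS]addrACA -opprD.
  have E2 : a m - a n = (x - a n) - (x - a m).
    by rewrite opprB [RHS]addrC addrA subrK.
  have h1 := nsqD h (x - a n) (x - a m).
  have h2 := nsqB h (x - a n) (x - a m).
  rewrite -E1 (nsq_dbl h) in h1.
  rewrite E2 h2.
  have := dle c Wc; have := (Ha n).2; have := (Ha m).2; lra.
have [z hz] : exists z, forall eps : R, 0 < eps -> exists N, forall n, (N <= n)%N ->
      nsq ip (a n - z) < eps.
  apply: hc => e e0.
  have e40 : 0 < e / 4 by rewrite divr_gt0.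
  have [N HN] := en_small e40; exists N => m n Hm Hn.
  have := cau n m; have := HN _ Hm; have := HN _ Hn; lra.
have orth w : W w -> re ip (x - z) w = 0.
  move=> Ww; have [->|wn0] := eqVneq w 0; first by rewrite (re0r h).
  have C0 : 0 < nsq ip w.
    rewrite lt_def (nsq_ge0 h) andbT; apply/eqP => E0; move: wn0.
    by rewrite (nsq_eq0 h E0) eqxx.
  have key n : re ip (x - z) w ^+ 2 <= 2 * nsq ip w * (en R n + nsq ip (a n - z)).
    have hB : re ip (x - a n) w ^+ 2 <= en R n * nsq ip w.
      apply: quad_bound => // t.
      have Wt : W (t%:C *: w + a n) by apply: (WL) => //; exact: (Ha n).1.
      have := dle _ Wt; have := (Ha n).2.
      have -> : x - (t%:C *: w + a n) = (x - a n) + (- t)%:C *: w.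
        by rewrite rmorphN scaleNr opprD addrCA addrA (addrC (- _) x) addrAC.
      rewrite (nsqDZ h); lra.
    have hR := CS_re h (a n - z) w.
    have -> : x - z = (x - a n) + (a n - z) by rewrite addrA subrK.
    rewrite (reDl h).
    have := sqr_ge0 (re ip (x - a n) w - re ip (a n - z) w).
    nra.
  set r := re ip (x - z) w in key *.
  have [//|rn0] := eqVneq r 0.
  have r2 : 0 < r ^+ 2 by rewrite lt_def sqrf_eq0 rn0 /= sqr_ge0.
  pose del := r ^+ 2 / (4 * nsq ip w).
  have del0 : 0 < del by rewrite divr_gt0 // mulr_gt0.
  have [N1 HN1] := en_small del0.
  have [N2 HN2] := hz _ del0.
  have := key (maxn N1 N2).
  have := HN1 (maxn N1 N2) (leq_maxl _ _).
  have := HN2 (maxn N1 N2) (leq_maxr _ _).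
  have : r ^+ 2 = 4 * nsq ip w * del by rewrite /del; field; rewrite gt_eqF // mulr_gt0.
  nra.
have xz : x = z.
  apply/eqP; rewrite -subr_eq0; apply/eqP; apply: perp => w Ww.
  have o1 := orth w Ww.
  have W2 : W ('i%C *: w) by rewrite -[_ *: w]addr0; apply: (WL).
  have o2 := orth _ W2.
  apply: complex_eq0.
    by rewrite -/(re ip w (x - z)) (reC h).
  by move: o2; rewrite (reC h) /re (ipZl h) ReiM => /eqP; rewrite oppr_eq0 => /eqP.
subst z.
have [N HN] := hz _ eps0.
exists (a N); split; first exact: (Ha N).1.
by rewrite -(nsqN h) opprB; apply: HN.
Qed.

Definition ip2 (R : realType) (G : lmodType R[i]) (ipG : G -> G -> R[i])
  (p q : G * G) : R[i] := ipG p.1 q.1 + ipG p.2 q.2.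

Lemma ip2_inner (R : realType) (G : lmodType R[i]) (ipG : G -> G -> R[i]) :
  is_inner_product ipG -> is_inner_product (ip2 ipG).
Proof.
move=> h; have h' := h; case: h' => L C P D; split.
- move=> a x y z; rewrite /ip2 /= !L; ring.
- by move=> x y; rewrite /ip2 !(C x.1) !(C x.2) rmorphD.
- by move=> x; rewrite /ip2 addr_ge0.
- case=> x1 x2; rewrite /ip2 /= => /eqP; rewrite paddr_eq0 // => /andP[/eqP/D -> /eqP/D ->].
  by [].
Qed.

Lemma nsq2E (R : realType) (G : lmodType R[i]) (ipG : G -> G -> R[i]) p :
  nsq (ip2 ipG) p = nsq ipG p.1 + nsq ipG p.2.
Proof. by rewrite /nsq /ip2 ReD. Qed.

Lemma ip2_complete (R : realType) (G : lmodType R[i]) (ipG : G -> G -> R[i]) :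
  is_inner_product ipG -> is_complete ipG -> is_complete (ip2 ipG).
Proof.
move=> h hc u cu.
have [l1 h1] : exists l1, forall eps : R, 0 < eps -> exists N, forall n, (N <= n)%N ->
    nsq ipG ((u n).1 - l1) < eps.
  apply: hc => e e0; have [N HN] := cu e e0; exists N => m n Hm Hn.
  have := HN m n Hm Hn; rewrite nsq2E /=; have := nsq_ge0 h ((u m).2 - (u n).2); lra.
have [l2 h2] : exists l2, forall eps : R, 0 < eps -> exists N, forall n, (N <= n)%N ->
    nsq ipG ((u n).2 - l2) < eps.
  apply: hc => e e0; have [N HN] := cu e e0; exists N => m n Hm Hn.
  have := HN m n Hm Hn; rewrite nsq2E /=; have := nsq_ge0 h ((u m).1 - (u n).1); lra.
exists (l1, l2) => e e0.
have e2 : 0 < e / 2 by rewrite divr_gt0.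
have [N1 HN1] := h1 _ e2; have [N2 HN2] := h2 _ e2.
exists (maxn N1 N2) => n Hn; rewrite nsq2E /=.
have := HN1 n (leq_trans (leq_maxl _ _) Hn); have := HN2 n (leq_trans (leq_maxr _ _) Hn).
lra.
Qed.

Lemma perp_dense2 (R : realType) (G : lmodType R[i]) (ipG : G -> G -> R[i])
  (hG : is_hilbert ipG) (W : set (G * G))
  (W0 : W 0) (WL : forall a u v, W u -> W v -> W (a *: u + v))
  (perp : forall x y, (forall w, W w -> ipG w.1 x + ipG w.2 y = 0) -> x = 0 /\ y = 0) :
  dense_in2 ipG W.
Proof.
case: hG => h hc.
have hd : dense_in (ip2 ipG) W.
  apply: (perp_dense (ip2_inner h) (ip2_complete h hc) W0 WL).
  by case=> x y Hp; have [-> ->] := perp x y Hp.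
move=> x y e e0; have [p [Wp Hp]] := hd (x, y) e e0.
by exists p; split=> //; rewrite nsq2E in Hp.
Qed.

Lemma lin0 (R : realType) (H G : lmodType R[i]) (D : set H) (L : H -> G) :
  D 0 -> linear_on D L -> L 0 = 0.
Proof.
move=> D0 hL; have := hL 1 0 0 D0 D0; rewrite scale1r !addr0 scale1r => E.
by apply: (addrI (L 0)); rewrite addr0 -E.
Qed.

Lemma dom_op (R : realType) (H : lmodType R[i]) (T : set (H * H)) :
  is_operator T -> dom T 0 /\ forall a f g, dom T f -> dom T g -> dom T (a *: f + g).
Proof.
case=> T0 TL _; split; first by exists 0.
by move=> a f g [h Tfh] [k Tgk]; exists (a *: h + k); exact: (TL a (f, h) (g, k)).
Qed.

Lemma ran2_sub (R : realType) (H G : lmodType R[i]) (T : set (H * H)) (L0 L1 : H -> G) :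
  is_operator T -> linear_on (dom T) L0 -> linear_on (dom T) L1 ->
  ran2 T L0 L1 0 /\ forall a u v, ran2 T L0 L1 u -> ran2 T L0 L1 v ->
    ran2 T L0 L1 (a *: u + v).
Proof.
move=> hT h0 h1; have [D0 DL] := dom_op hT; split.
  by exists 0 => //; rewrite (lin0 D0 h0) (lin0 D0 h1).
move=> a _ _ [f df <-] [g dg <-]; exists (a *: f + g); first exact: DL.
by rewrite h0 // h1.
Qed.

Lemma dense_zero (R : realType) (G : lmodType R[i]) (ipG : G -> G -> R[i])
  (h : is_inner_product ipG) (A : set G) x :
  dense_in ipG A -> (forall a, A a -> ipG a x = 0) -> x = 0.
Proof.
move=> dA o; apply: (nsq_eq0 h).
have ge := nsq_ge0 h x.
have [//|xn0] := eqVneq (nsq ipG x) 0.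
have xp : 0 < nsq ipG x by rewrite lt_def xn0 ge.
have [a [Aa Ha]] := dA x _ xp.
move: Ha; rewrite (nsqB h) (reC h) /re (o a Aa) /=.
have := nsq_ge0 h a; lra.
Qed.

Lemma dense_setT (R : realType) (G : lmodType R[i]) (ipG : G -> G -> R[i])
  (h : is_inner_product ipG) : dense_in ipG setT.
Proof. by move=> x e e0; exists x; split=> //; rewrite subrr /nsq (ip0l h). Qed.

Unset Implicit Arguments.
Close Scope complex_scope.

Theorem lemma2p3 (R : realType)
  (H : lmodType R[i]) (ipH : H -> H -> R[i])
  (G : lmodType R[i]) (ipG : G -> G -> R[i])
  (hH : is_hilbert ipH) (sepH : separable ipH) (hG : is_hilbert ipG)
  (S St T Tt : set (H * H)) (Gam0 Gam1 Gamt0 Gamt1 : H -> G)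
  (hset : triple_setting (G:=G) ipH S St T Tt Gam0 Gam1 Gamt0 Gamt1)
  (hGcond : cond_G ipH ipG T Tt Gam0 Gam1 Gamt0 Gamt1)
  (hM : cond_M ipH T Tt Gam0 Gamt0) :
  [/\ (dense_in ipG (ran T Gam0) -> ran Tt Gamt0 = setT ->
         dense_in2 ipG (ran2 T Gam0 Gam1)),
      (dense_in ipG (ran Tt Gamt0) -> ran T Gam0 = setT ->
         dense_in2 ipG (ran2 Tt Gamt0 Gamt1)) &
      (ran T Gam0 = setT -> ran Tt Gamt0 = setT ->
         cond_DD ipG T Tt Gam0 Gam1 Gamt0 Gamt1 /\
         quasi_boundary_triple ipH ipG T Tt Gam0 Gam1 Gamt0 Gamt1)].
Proof.
have hHi := hH.1; have hGi := hG.1.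
case: hset => _ [opT opTt] _ _ [l0 l1 lt0 lt1].
have hi : dense_in ipG (ran T Gam0) -> ran Tt Gamt0 = setT ->
         dense_in2 ipG (ran2 T Gam0 Gam1).
  move=> dT rTt; have [W0 WL] := ran2_sub opT l0 l1.
  apply: perp_dense2 => // x y orth.
  have y0 : y = 0.
    have : ran Tt Gamt0 y by rewrite rTt.
    case=> g [k Tgk] gy; rewrite -gy.
    have adj : adjoint ipH (restr_ker T Gam0) (g, k).
      move=> [f h] [Tfh /= G0] /=.
      have := hGcond (f, h) (g, k) Tfh Tgk; rewrite /= G0 (ip0l hGi) subr0 gy.
      have mem : ran2 T Gam0 Gam1 (Gam0 f, Gam1 f) by exists f => //; exists h.
      have := orth _ mem; rewrite /= G0 (ip0l hGi) add0r => ->.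
      by move/eqP; rewrite subr_eq0 => /eqP.
    by rewrite hM.1 in adj; case: adj.
  subst y; split=> //; apply: (dense_zero hGi dT) => _ [f df <-].
  have mem : ran2 T Gam0 Gam1 (Gam0 f, Gam1 f) by exists f.
  by have := orth _ mem; rewrite /= (ip0r hGi) addr0.
have hii : dense_in ipG (ran Tt Gamt0) -> ran T Gam0 = setT ->
         dense_in2 ipG (ran2 Tt Gamt0 Gamt1).
  move=> dTt rT; have [W0 WL] := ran2_sub opTt lt0 lt1.
  apply: perp_dense2 => // x y orth.
  have y0 : y = 0.
    have : ran T Gam0 y by rewrite rT.
    case=> f [h Tfh] fy; rewrite -fy.
    have adj : adjoint ipH (restr_ker Tt Gamt0) (f, h).
      move=> [g k] [Tgk /= G0] /=.
      have := hGcond (f, h) (g, k) Tfh Tgk; rewrite /= G0 (ip0r hGi) sub0r fy.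
      have o : ipG (Gamt1 g) y = 0.
        have mem : ran2 Tt Gamt0 Gamt1 (Gamt0 g, Gamt1 g) by exists g => //; exists k.
        by have := orth _ mem; rewrite /= G0 (ip0l hGi) add0r.
      rewrite (ipC hGi (Gamt1 g) y) o rmorph0 oppr0 => /eqP.
      rewrite subr_eq0 => /eqP E.
      by rewrite (ipC hHi f k) -E -(ipC hHi h g).
    by rewrite hM.2 in adj; case: adj.
  subst y; split=> //; apply: (dense_zero hGi dTt) => _ [g dg <-].
  have mem : ran2 Tt Gamt0 Gamt1 (Gamt0 g, Gamt1 g) by exists g.
  by have := orth _ mem; rewrite /= (ip0r hGi) addr0.
split=> // rT rTt.
have DD : cond_DD ipG T Tt Gam0 Gam1 Gamt0 Gamt1.
  split; [apply: hi => //| apply: hii => //].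
    by rewrite rT; exact: dense_setT.
  by rewrite rTt; exact: dense_setT.
by split=> //; split.
Qed.
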